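(* Let $\Omega\subseteq\mathbb{R}^2$ be a compact Borel set, $\rho\in\mathbb{N}$, and for each $i\in\{1,\dots,\rho\}$ let $P_i$ be a dimensional facility with root point $p_i$. Let $\Omega_i=\{q\in\mathbb{R}^2:P_i^q\subseteq\Omega\}$ and $$\Gamma=\{(q_1,\dots,q_\rho)\in\Omega_1\times\dots\times\Omega_\rho:\ \operatorname{int}(P_i^{q_i})\cap\operatorname{int}(P_j^{q_j})=\emptyset\ \text{for all } i,j\in\{1,\dots,\rho\},\ i\neq j\}.$$ Then $\Gamma$ is a compact subset of $\mathbb{R}^{2\rho}$.
   Context: A dimensional facility is a compact set $P\subseteq\mathbb{R}^2$ that is the closure of a nonempty open connected set; each $P_i$ has a distinguished root point $p_i\in P_i$, and for $q\in\mathbb{R}^2$, $P_i^{q}:=P_i+(q-p_i)$ denotes the translate of $P_i$ whose root point is at $q$. *)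

(* Defs.v *)
(* Points of R^2 are row vectors 'rV[R]_2;
   R^(2 rho) is represented as rho x 2 matrices 'M[R]_(rho,2) (row i = q_i),
   with the canonical normed (product / max-norm) topology. *)
From HB Require Import structures.
From mathcomp Require Import all_boot all_order all_algebra.
From mathcomp Require Import all_classical all_reals all_analysis.
Set Implicit Arguments. Unset Strict Implicit. Unset Printing Implicit Defensive.
Import Order.TTheory GRing.Theory Num.Theory.
Import numFieldNormedType.Exports.
Local Open Scope classical_set_scope.
Local Open Scope ring_scope.

Definition borel_set {R : realType} (A : set 'rV[R]_2) : Prop :=
  <<s (@open 'rV[R]_2) >> A.

Definition dimensional_facility {R : realType} (P : set 'rV[R]_2) : Prop :=
  compact P /\ exists U : set 'rV[R]_2,
    [/\ open U, U !=set0, connected U & P = closure U].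

Definition translate_root {R : realType} (P : set 'rV[R]_2) (p q : 'rV[R]_2)
  : set 'rV[R]_2 := (fun x => x + (q - p)) @` P.

Definition feasible_roots {R : realType} (Omega P : set 'rV[R]_2) (p : 'rV[R]_2)
  : set 'rV[R]_2 := [set q | translate_root P p q `<=` Omega].

(* Gamma, with Q : 'M_(rho,2) and q_i = row i Q. *)
Definition Gamma_set {R : realType} (rho : nat) (Omega : set 'rV[R]_2)
  (P : 'I_rho -> set 'rV[R]_2) (p : 'I_rho -> 'rV[R]_2) : set 'M[R]_(rho, 2) :=
  [set Q | (forall i, feasible_roots Omega (P i) (p i) (row i Q)) /\
           (forall i j, i != j ->
              interior (translate_root (P i) (p i) (row i Q)) `&`
              interior (translate_root (P j) (p j) (row j Q)) = set0)].

(* Main.v *)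
Require Import Defs.
From HB Require Import structures.
From mathcomp Require Import all_boot all_order all_algebra.
From mathcomp Require Import all_classical all_reals all_analysis.
From mathcomp Require Import ring lra.
Import Order.TTheory GRing.Theory Num.Theory.
Import numFieldNormedType.Exports.
Local Open Scope classical_set_scope.
Local Open Scope ring_scope.

Section S.
Variable R : realType.
Lemma cont_row m n (i : 'I_m) : continuous (fun Q : 'M[R]_(m,n) => row i Q).
Proof.
move=> u A /nbhs_ballP[e /= e0 eA].
apply/nbhs_ballP; exists e => //= v [_ uv]; apply: eA; split => // a j.
by rewrite !mxE; apply: uv.
Qed.
Lemma cont_addc m n (c : 'M[R]_(m,n)) : continuous (fun y : 'M[R]_(m,n) => y + c).
Proof.
move=> u A /nbhs_ballP[e /= e0 eA].
apply/nbhs_ballP; exists e => //= v [_ uv]; apply: eA; split => // a j.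
rewrite !mxE; move: (uv a j); rewrite /ball /=.
rewrite opprD addrACA (_ : c a j - c a j = 0) ?addr0 //; exact: subrr.
Qed.
Lemma cont_arow m n (i : 'I_m) (a : 'rV[R]_n) : continuous (fun Q : 'M[R]_(m,n) => a + row i Q).
Proof.
move=> u A /nbhs_ballP[e /= e0 eA].
apply/nbhs_ballP; exists e => //= v [_ uv]; apply: eA; split => // b j.
rewrite !mxE; move: (uv i j); rewrite /ball /=.
rewrite opprD addrACA (_ : a b j - a b j = 0) ?add0r //; exact: subrr.
Qed.
Lemma cont_srow m n (i : 'I_m) (a : 'rV[R]_n) : continuous (fun Q : 'M[R]_(m,n) => a - row i Q).
Proof.
move=> u A /nbhs_ballP[e /= e0 eA].
apply/nbhs_ballP; exists e => //= v [_ uv]; apply: eA; split => // b j.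
rewrite !mxE; move: (uv i j); rewrite /ball /=.
rewrite (_ : _ + _ + _ = - (u i j - v i j)) ?normrN //; ring.
Qed.
Lemma cont_f m n : continuous (fun w : 'rV['rV[R]_n]_m => \matrix_(i,j) (w ord0 i) ord0 j : 'M[R]_(m,n)).
Proof.
move=> w A /nbhs_ballP[e /= e0 eA].
exists (fun a b => ball (w a b) e).
  by move=> a b; exact: nbhsx_ballx.
move=> N /= HN; apply: eA; split => // a b; rewrite !mxE.
by have [_ /(_ ord0 b)] := HN ord0 a.
Qed.
Lemma translate_eq (P : set 'rV[R]_2) (p q : 'rV[R]_2) :
  (fun x => x + (q - p)) @` P = [set y | P (y - (q - p))].
Proof.
apply/seteqP; split => y /=.
  by case=> x Px <-; rewrite addrK.
by move=> Py; exists (y - (q - p)) => //; rewrite subrK.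
Qed.
Lemma interior_translate (A : set 'rV[R]_2) (c z : 'rV[R]_2) :
  interior [set y | A (y - c)] z <-> nbhs (z - c) A.
Proof.
split.
  move=> Hz; have Hz' : nbhs ((z - c) + c) [set y | A (y - c)] by rewrite subrK.
  have := @cont_addc 1 2 c (z - c) _ Hz'.
  move=> H; have H2 : nbhs (z - c) ((fun y => y + c) @^-1` [set y | A (y - c)]) := H.
  by apply: filterS H2 => w /=; rewrite addrK.
move=> Hz; have := @cont_addc 1 2 (- c) z _ Hz.
move=> H; have H2 : nbhs z ((fun y => y + - c) @^-1` A) := H.
exact: H2.
Qed.
End S.
Theorem lemma2 (R : realType) (Omega : set 'rV[R]_2) (rho : nat)
  (P : 'I_rho -> set 'rV[R]_2) (p : 'I_rho -> 'rV[R]_2) :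
  compact Omega -> borel_set Omega ->
  (forall i, dimensional_facility (P i)) ->
  (forall i, P i (p i)) ->
  compact (Gamma_set Omega P p).
Proof.
move=> cO _ _ Pp.
rewrite /Gamma_set /feasible_roots /translate_root.
set G := [set Q | _].
have clO : closed Omega by apply: compact_closed => //; exact: norm_hausdorff.
have clG : closed G.
  move=> Q clQ; split.
    move=> i y [x Px <-]; apply: clO => B nB.
    have nB' : nbhs ((x - p i) + row i Q) B by rewrite addrAC -addrA.
    have H2 : nbhs Q ((fun Q => (x - p i) + row i Q) @^-1` B) :=
      @cont_arow R rho 2 i (x - p i) Q B nB'.
    have [Q' [GQ' BQ']] := clQ _ H2.
    exists (x - p i + row i Q'); split => //.
    apply: (GQ'.1 i); exists x => //; by rewrite addrAC -addrA.
  move=> i j ij; apply/seteqP; split => // z [zi zj].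
  move: zi zj; rewrite !translate_eq => /interior_translate zi /interior_translate zj.
  have ei : z - (row i Q - p i) = (z + p i) - row i Q by rewrite opprB addrA addrAC.
  have ej : z - (row j Q - p j) = (z + p j) - row j Q by rewrite opprB addrA addrAC.
  rewrite ei in zi; rewrite ej in zj.
  have ni : nbhs Q ((fun Q => (z + p i) - row i Q) @^-1` (P i)°) :=
    @cont_srow R rho 2 i (z + p i) Q _ (nbhs_interior zi).
  have nj : nbhs Q ((fun Q => (z + p j) - row j Q) @^-1` (P j)°) :=
    @cont_srow R rho 2 j (z + p j) Q _ (nbhs_interior zj).
  have [Q' [GQ' [/= Hi Hj]]] := clQ _ (filterI ni nj).
  have := GQ'.2 i j ij; rewrite !translate_eq => H.
  suff : set0 z by [].
  rewrite -H; split; apply/interior_translate.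
    by rewrite opprB addrA; exact: Hi.
  by rewrite opprB addrA; exact: Hj.
have K0c := @rV_compact _ rho (fun _ => Omega) (fun _ => cO).
have fK := continuous_compact (continuous_subspaceT (@cont_f R rho 2)) K0c.
apply: (subclosed_compact clG fK).
move=> Q GQ; exists (\row_i row i Q).
  move=> i; rewrite mxE; apply: (GQ.1 i); exists (p i) => //.
  by rewrite addrC subrK.
by apply/matrixP => a b; rewrite !mxE.
Qed.
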